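(* Let Assumptions 1 (with $\delta\in(0,1]$) and 2 hold. For $A\ge1$ define $\alpha=2L\{1-\Phi(A\sqrt{2\log L})\}+2A_0(1+A\sqrt{2\log L})^{1+\delta}/(L^{A^2-1}d_{n,\delta}^{2+\delta})$, set $r=A\sqrt{2\log(L)/n}$, and assume $L\le\exp(d_{n,\delta}^2/(2A^2))$. Let $\widehat\beta$ be any solution of $$\min\Big\{|{\bf D_X}^{-1}\beta|_1:\ \beta\in\mathbb R^K,\ \Big|\frac1n{\bf D_Z}{\bf Z}^T({\bf Y}-{\bf X}\beta)\Big|_\infty\le\sigma_*r\Big\},$$ where $\sigma_*$ is the constant of Assumption 2. Then with probability at least $1-\alpha-\gamma_1$, $$\big|{\bf D_X}^{-1}(\widehat\beta-\beta^* )\big|_p\le\frac{2\sigma_*r}{\kappa_{p,J(\beta^* )}}\quad\forall p\in[1,\infty],\qquad |\widehat\beta_k-\beta^*_k|\le\frac{2\sigma_*r}{x_{k*}\kappa^*_{k,J(\beta^* )}}\quad\forall k=1,\dots,K,$$ where the sensitivities are those defined with the cone $C_J$ taken with $c=0$, i.e. $C_J=\{\Delta:|\Delta_{J^c}|_1\le|\Delta_J|_1\}$.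
   Context: Setting: integers $n,K,L$ with $L\ge K$, $k_{\rm end}\in\{0,\dots,K\}$; observations $(y_i,x_i,z_i)$, $i=1,\dots,n$, with $y_i=x_i^T\beta^*+u_i$, $x_i\in\mathbb R^K$, $z_i\in\mathbb R^L$, the $(y_i,x_i,z_i,u_i)$ mutually independent; the exogenous regressors are their own instruments: $z_{li}=x_{(k_{\rm end}+l)i}$ for $l\le K-k_{\rm end}$. ${\bf Y},{\bf X},{\bf Z}$ data matrices; $x_{k*}=\max_i|x_{ki}|$, $z_{l*}=\max_i|z_{li}|$ (positive); ${\bf D_X}={\rm diag}(x_{k*}^{-1})$, ${\bf D_Z}={\rm diag}(z_{l*}^{-1})$; $\Psi_n=\frac1n{\bf D_Z}{\bf Z}^T{\bf X}{\bf D_X}$; $\mathbb E_n[U^2]=\frac1n\sum u_i^2$. $J(\beta)$ support; $\Delta_J$ zeroes coordinates outside $J$. Sensitivities: $\kappa_{p,J}=\inf\{|\Psi_n\Delta|_\infty:\Delta\in C_J,|\Delta|_p=1\}$, $\kappa^*_{k,J}=\inf\{|\Psi_n\Delta|_\infty:\Delta\in C_J,\Delta_k=1\}$. Assumption 1: for all $i,l$, $\mathbb E|z_{li}u_i|^{2+\delta}<\infty$, $\mathbb E[z_{li}u_i]=0$, $z_{li}u_i$ not a.s. zero; $d_{n,\delta}=\min_l\sqrt{\sum_i\mathbb E z_{li}^2u_i^2}/(\sum_i\mathbb E|z_{li}u_i|^{2+\delta})^{1/(2+\delta)}$. Assumption 2: there are $\sigma_*>0$, $\gamma_1\in(0,1)$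 with $\mathbb P(\mathbb E_n[U^2]\le\sigma_*^2)\ge1-\gamma_1$. $\Phi$ is the standard normal cdf and $A_0$ the absolute constant of the Jing–Shao–Wang self-normalized moderate deviation bound: for independent mean-zero $X_i$ with $0<\mathbb E|X_i|^{2+\delta}<\infty$, $|\mathbb P(S_n/V_n\ge x)-(1-\Phi(x))|\le A_0(1+x)^{1+\delta}e^{-x^2/2}/d^{2+\delta}$ for $0\le x\le d$, with $S_n=\sum X_i$, $V_n^2=\sum X_i^2$, $d=(\sum\mathbb EX_i^2)^{1/2}/(\sum\mathbb E|X_i|^{2+\delta})^{1/(2+\delta)}$. *)

(* Defs.v *)
From HB Require Import structures.
From mathcomp Require Import all_boot all_order all_algebra.
From mathcomp Require Import all_classical all_reals all_analysis.
Set Implicit Arguments. Unset Strict Implicit. Unset Printing Implicit Defensive.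
Import Order.TTheory GRing.Theory Num.Theory.
Local Open Scope classical_set_scope.
Local Open Scope ring_scope.

(* l_p norm, p in [1, +oo] (p is an extended real; -oo is never used) *)
Definition lpnorm (R : realType) (K : nat) (p : \bar R) (v : 'I_K -> R) : R :=
  match p with
  | EFin q => powR (\sum_(k < K) powR `|v k| q) q^-1
  | +oo%E => \big[Num.max/0]_(k < K) `|v k|
  | -oo%E => 0
  end.

Definition l1norm (R : realType) (K : nat) (v : 'I_K -> R) : R :=
  \sum_(k < K) `|v k|.

Definition linfnorm (R : realType) (L : nat) (v : 'I_L -> R) : R :=
  \big[Num.max/0]_(l < L) `|v l|.

Definition supp (R : realType) (K : nat) (b : 'I_K -> R) : set 'I_K :=
  [set k | b k != 0].

Definition coneC (R : realType) (K : nat) (J : set 'I_K) : set ('I_K -> R) :=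
  [set D | \sum_(k < K | ~~ `[< J k >]) `|D k| <= \sum_(k < K | `[< J k >]) `|D k|].

Definition colmax (R : realType) (n K : nat) (x : 'I_n -> 'I_K -> R) (k : 'I_K) : R :=
  \big[Num.max/0]_(i < n) `|x i k|.

(* Psi_n = (1/n) D_Z Z^T X D_X *)
Definition Psi (R : realType) (n K L : nat) (x : 'I_n -> 'I_K -> R)
  (z : 'I_n -> 'I_L -> R) (l : 'I_L) (k : 'I_K) : R :=
  (n%:R)^-1 * (colmax z l)^-1 * (colmax x k)^-1 * \sum_(i < n) z i l * x i k.

Definition Psimul (R : realType) (n K L : nat) (x : 'I_n -> 'I_K -> R)
  (z : 'I_n -> 'I_L -> R) (D : 'I_K -> R) : 'I_L -> R :=
  fun l => \sum_(k < K) Psi x z l k * D k.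

(* sensitivity kappa_{p,J} (extended real: inf of the empty set is +oo) *)
Definition kappa (R : realType) (n K L : nat) (x : 'I_n -> 'I_K -> R)
  (z : 'I_n -> 'I_L -> R) (p : \bar R) (J : set 'I_K) : \bar R :=
  ereal_inf [set (linfnorm (Psimul x z D))%:E
            | D in [set D | coneC J D /\ lpnorm p D = 1]].

Definition kappa_star (R : realType) (n K L : nat) (x : 'I_n -> 'I_K -> R)
  (z : 'I_n -> 'I_L -> R) (k : 'I_K) (J : set 'I_K) : \bar R :=
  ereal_inf [set (linfnorm (Psimul x z D))%:E
            | D in [set D | coneC J D /\ D k = 1]].

Definition feasible (R : realType) (n K L : nat) (y : 'I_n -> R)
  (x : 'I_n -> 'I_K -> R) (z : 'I_n -> 'I_L -> R) (bound : R) (b : 'I_K -> R) :=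
  linfnorm (fun l : 'I_L => (n%:R)^-1 * (colmax z l)^-1 *
     \sum_(i < n) z i l * (y i - \sum_(k < K) x i k * b k)) <= bound.

Definition objective (R : realType) (n K : nat) (x : 'I_n -> 'I_K -> R)
  (b : 'I_K -> R) : R :=
  l1norm (fun k => colmax x k * b k).

Definition is_solution (R : realType) (n K L : nat) (y : 'I_n -> R)
  (x : 'I_n -> 'I_K -> R) (z : 'I_n -> 'I_L -> R) (bound : R) (b : 'I_K -> R) :=
  feasible y x z bound b /\
  forall b', feasible y x z bound b' -> objective x b <= objective x b'.

Definition gen_sigma (d : measure_display) (T : measurableType d) (R : realType)
  (F : set (T -> R)) : set (set T) :=
  <<s \bigcup_(f in F) [set f @^-1` B | B in [set B : set R | measurable B]] >>.

Definition mutually_independent (d : measure_display) (T : measurableType d)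
  (R : realType) (P : probability T R) (I : finType) (F : I -> set (set T)) :=
  forall (S : {set I}) (E : I -> set T),
    (forall i, i \in S -> F i (E i)) ->
    P (\big[setI/setT]_(i in S) E i) = (\prod_(i in S) P (E i))%E.

Definition Phi (R : realType) (x : R) : R :=
  fine (normal_prob 0 1 `]-oo, x]).

Definition Ex (d : measure_display) (T : measurableType d) (R : realType)
  (P : probability T R) (f : T -> R) : R :=
  fine (\int[P]_w (f w)%:E).

(* the quantity d of Jing-Shao-Wang for a family X_1..X_m *)
Definition jsw_d (d : measure_display) (T : measurableType d) (R : realType)
  (P : probability T R) (delta : R) (m : nat) (X : 'I_m -> T -> R) : R :=
  Num.sqrt (\sum_(i < m) Ex P (fun w => X i w ^+ 2)) /
  powR (\sum_(i < m) Ex P (fun w => powR `|X i w| (2 + delta))) (2 + delta)^-1.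

(* A0 is a constant for which the Jing-Shao-Wang self-normalized moderate
   deviation bound holds (for all independent families on the space T). *)
Definition JSW_constant (d : measure_display) (T : measurableType d)
  (R : realType) (P : probability T R) (delta A0 : R) :=
  forall (m : nat) (X : 'I_m -> T -> R),
    (0 < m)%N ->
    (forall i, measurable_fun setT (X i)) ->
    mutually_independent P (fun i => gen_sigma [set X i]) ->
    (forall i, P.-integrable setT (fun w => (X i w)%:E)) ->
    (forall i, Ex P (X i) = 0) ->
    (forall i, (0 < \int[P]_w (powR `|X i w| (2 + delta))%:E)%E) ->
    (forall i, (\int[P]_w (powR `|X i w| (2 + delta))%:E < +oo)%E) ->
    forall t : R, 0 <= t -> t <= jsw_d P delta X ->
      `| fine (P [set w | t <= (\sum_(i < m) X i w) /
                                Num.sqrt (\sum_(i < m) X i w ^+ 2)])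
         - (1 - Phi t) |
      <= A0 * powR (1 + t) (1 + delta) * expR (- t ^+ 2 / 2)
           / powR (jsw_d P delta X) (2 + delta).

Definition d_n_delta (d : measure_display) (T : measurableType d) (R : realType)
  (P : probability T R) (delta : R) (n L : nat)
  (z : 'I_n -> 'I_L -> T -> R) (u : 'I_n -> T -> R) : R :=
  inf [set jsw_d P delta (fun i w => z i l w * u i w) | l in [set: 'I_L]].

(* Main.v *)
Require Import Defs.
From HB Require Import structures.
From mathcomp Require Import all_boot all_order all_algebra.
From mathcomp Require Import all_classical all_reals all_analysis.
From mathcomp Require Import ring lra.
From mathcomp Require Import measurable_realfun.
Import Order.TTheory GRing.Theory Num.Theory.
Local Open Scope classical_set_scope.
Local Open Scope ring_scope.

Module Helpers.
Set Implicit Arguments. Unset Strict Implicit. Unset Printing Implicit Defensive.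
Section det.
Variable R : realType.

Lemma bigmax_ge0 (I : finType) (f : I -> R) : 0 <= \big[Num.max/0]_(i : I) f i.
Proof. by elim/big_rec: _ => // i m _ hm; rewrite le_max hm orbT. Qed.

Lemma le_bigmax_r (I : finType) (f : I -> R) i : f i <= \big[Num.max/0]_(j : I) f j.
Proof. by rewrite (bigD1 i) //= le_max lexx. Qed.

Lemma bigmax_leP (I : finType) (f : I -> R) B : 0 <= B -> (forall i, f i <= B) ->
  \big[Num.max/0]_(i : I) f i <= B.
Proof. by move=> B0 hf; elim/big_ind: _ => // a b ha hb; rewrite ge_max ha hb. Qed.

Lemma bigmax_scale (I : finType) (f : I -> R) c : 0 <= c ->
  \big[Num.max/0]_(i : I) (c * f i) = c * \big[Num.max/0]_(i : I) f i.
Proof.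
move=> c0; rewrite (big_morph (fun x => c * x) (id1 := 0) (op1 := Num.max)) ?mulr0 //.
by move=> a b; rewrite maxr_pMr.
Qed.

Lemma linfnorm_scale L (v : 'I_L -> R) c :
  linfnorm (fun l => c * v l) = `|c| * linfnorm v.
Proof.
rewrite /linfnorm -bigmax_scale //; apply: eq_bigr => l _; by rewrite normrM.
Qed.

Lemma linfnorm_ge0 L (v : 'I_L -> R) : 0 <= linfnorm v.
Proof. exact: bigmax_ge0. Qed.

Lemma linfnorm_leP L (v : 'I_L -> R) B : 0 <= B -> (forall l, `|v l| <= B) -> linfnorm v <= B.
Proof. exact: bigmax_leP. Qed.

Lemma le_linfnorm L (v : 'I_L -> R) l : `|v l| <= linfnorm v.
Proof. rewrite /linfnorm; exact: (le_bigmax_r (fun l => `|v l|) l). Qed.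

Lemma lpnorm_ge0 K p (v : 'I_K -> R) : 0 <= lpnorm p v.
Proof. case: p => [q||] /=; [exact: powR_ge0|exact: bigmax_ge0|by []]. Qed.

Lemma lpnorm_scale K p (v : 'I_K -> R) c : (1%:E <= p)%E -> 0 <= c ->
  lpnorm p (fun k => c * v k) = c * lpnorm p v.
Proof.
case: p => [q||] //= q1 c0.
- rewrite lee_fin in q1.
  have q0 : q != 0 by rewrite gt_eqF // (lt_le_trans ltr01).
  under eq_bigr do rewrite normrM (ger0_norm c0) powRM //.
  rewrite -mulr_sumr powRM ?powR_ge0 //; last by apply: sumr_ge0 => i _; exact: powR_ge0.
  by rewrite -powRrM mulfV // powRr1.
- by rewrite -bigmax_scale //; apply: eq_bigr => k _; rewrite normrM ger0_norm.
Qed.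

Lemma Psimul_scale n K L (x : 'I_n -> 'I_K -> R) (z : 'I_n -> 'I_L -> R) D c :
  Psimul x z (fun k => c * D k) = fun l => c * Psimul x z D l.
Proof.
apply: funext => l; rewrite /Psimul mulr_sumr; apply: eq_bigr => k _.
by rewrite mulrCA.
Qed.

Lemma coneC_scale K (J : set 'I_K) (D : 'I_K -> R) c :
  coneC J D -> coneC J (fun k => c * D k).
Proof.
rewrite /coneC /= => h.
under eq_bigr do rewrite normrM.
under [X in _ <= X]eq_bigr do rewrite normrM.
by rewrite -!mulr_sumr ler_wpM2l.
Qed.


Lemma concl_p n K L (x : 'I_n -> 'I_K -> R) (z : 'I_n -> 'I_L -> R) J D M p :
  coneC J D -> linfnorm (Psimul x z D) <= M -> (1%:E <= p)%E ->
  ((lpnorm p D)%:E * kappa x z p J <= M%:E)%E.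
Proof.
move=> hc hM p1.
have M0 : 0 <= M := le_trans (linfnorm_ge0 _) hM.
have [N0|N0] := eqVneq (lpnorm p D) 0; first by rewrite N0 mul0e lee_fin.
have Np : 0 < lpnorm p D by rewrite lt_neqAle eq_sym N0 lpnorm_ge0.
set N := lpnorm p D in N0 Np *.
pose D' := fun k => N^-1 * D k.
have hk : (kappa x z p J <= (N^-1 * linfnorm (Psimul x z D))%:E)%E.
  apply: ereal_inf_lbound; exists D'.
    split; first exact: coneC_scale.
    rewrite /D' (lpnorm_scale _ p1); last by rewrite invr_ge0 ltW.
    by rewrite -/N mulVf.
  by rewrite /D' Psimul_scale linfnorm_scale ger0_norm // invr_ge0 ltW.
apply: le_trans (lee_wpmul2l _ hk) _; first by rewrite lee_fin ltW.
by rewrite -EFinM lee_fin mulrA mulfV // mul1r.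
Qed.

Lemma concl_k n K L (x : 'I_n -> 'I_K -> R) (z : 'I_n -> 'I_L -> R) J D M k :
  coneC J D -> linfnorm (Psimul x z D) <= M ->
  ((`|D k|)%:E * kappa_star x z k J <= M%:E)%E.
Proof.
move=> hc hM.
have M0 : 0 <= M := le_trans (linfnorm_ge0 _) hM.
have [N0|N0] := eqVneq (D k) 0; first by rewrite N0 normr0 mul0e lee_fin.
pose D' := fun j => (D k)^-1 * D j.
have hk : (kappa_star x z k J <= (`|D k|^-1 * linfnorm (Psimul x z D))%:E)%E.
  apply: ereal_inf_lbound; exists D'.
    split; first exact: coneC_scale.
    by rewrite /D' mulVf.
  by rewrite /D' Psimul_scale linfnorm_scale normrV ?unitfE.
apply: le_trans (lee_wpmul2l _ hk) _; first by rewrite lee_fin.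
by rewrite -EFinM lee_fin mulrA mulfV ?normr_eq0 // mul1r.
Qed.

Lemma Psimul_res n K L (y : 'I_n -> R) (x : 'I_n -> 'I_K -> R) (z : 'I_n -> 'I_L -> R)
  (bs bh : 'I_K -> R) l :
  (forall k, 0 < colmax x k) ->
  Psimul x z (fun k => colmax x k * (bh k - bs k)) l =
  (n%:R)^-1 * (colmax z l)^-1 * \sum_(i < n) z i l * (y i - \sum_(k < K) x i k * bs k)
  - (n%:R)^-1 * (colmax z l)^-1 * \sum_(i < n) z i l * (y i - \sum_(k < K) x i k * bh k).
Proof.
move=> hx; rewrite -mulrBr -sumrB /Psimul.
have -> : \sum_(k < K) Psi x z l k * (colmax x k * (bh k - bs k)) =
    \sum_(k < K) (n%:R)^-1 * (colmax z l)^-1 * (\sum_(i < n) z i l * x i k) * (bh k - bs k).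
  apply: eq_bigr => k _; rewrite /Psi.
  have h0 : colmax x k != 0 by rewrite gt_eqF.
  rewrite !mulrA; congr (_ * _); rewrite -!mulrA; congr (_ * _); congr (_ * _).
  by rewrite mulrC -mulrA mulfV // mulr1.
under eq_bigr do rewrite -mulrA.
rewrite -mulr_sumr; congr (_ * _).
under eq_bigr do rewrite mulr_suml.
rewrite exchange_big /=; apply: eq_bigr => i _.
rewrite -mulrBr.
have e : forall y a b : R, y - a - (y - b) = b - a by move=> *; ring.
rewrite e -sumrB mulr_sumr; apply: eq_bigr => k _.
by rewrite mulrBr mulrBr mulrA mulrA.
Qed.

Lemma det_main n K L (y : 'I_n -> R) (x : 'I_n -> 'I_K -> R) (z : 'I_n -> 'I_L -> R)
  (bs bh : 'I_K -> R) B :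
  (forall k, 0 < colmax x k) -> feasible y x z B bs -> is_solution y x z B bh ->
  coneC (supp bs) (fun k => colmax x k * (bh k - bs k)) /\
  linfnorm (Psimul x z (fun k => colmax x k * (bh k - bs k))) <= 2 * B.
Proof.
move=> hx fs [fh opt].
have B0 : 0 <= B := le_trans (linfnorm_ge0 _) fs.
split; last first.
  apply: linfnorm_leP; first by rewrite mulr_ge0.
  move=> l; rewrite (Psimul_res y) // mulr2n mulrDl mul1r.
  apply: le_trans (ler_normB _ _) _; apply: lerD.
    exact: le_trans (le_linfnorm _ l) fs.
  exact: le_trans (le_linfnorm _ l) fh.
have o := opt _ fs; move: o; rewrite /objective /l1norm /coneC /=.
have jE : forall k, `[< supp bs k >] = (bs k != 0).
  by move=> k; apply: asboolb.
set F := fun k => `|colmax x k * (bh k - bs k)|.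
rewrite [X in _ -> X <= _](eq_bigl (fun k => bs k == 0)); last by move=> k; rewrite jE negbK.
rewrite [X in _ -> _ <= X](eq_bigl (fun k => bs k != 0)); last by move=> k; rewrite jE.
rewrite (bigID (fun k => bs k != 0)) [X in _ <= X -> _](bigID (fun k => bs k != 0)) /=.
have -> : \sum_(i < K | ~~ (bs i != 0)) `|colmax x i * bs i| = 0.
  by apply: big1 => i; rewrite negbK => /eqP ->; rewrite mulr0 normr0.
have e1 : \sum_(i < K | ~~ (bs i != 0)) `|colmax x i * bh i| = \sum_(i < K | bs i == 0) F i.
  apply: eq_big => i; first by rewrite negbK.
  by rewrite negbK /F => /eqP ->; rewrite subr0.
have e2 : \sum_(i < K | bs i != 0) `|colmax x i * bs i| <=
          \sum_(i < K | bs i != 0) `|colmax x i * bh i| + \sum_(i < K | bs i != 0) F i.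
  rewrite -big_split /=; apply: ler_sum => i _.
  have -> : colmax x i * bs i = colmax x i * bh i - colmax x i * (bh i - bs i).
    by rewrite mulrBr opprB addrC subrK.
  exact: ler_normB.
move: e1 e2; rewrite addr0 => -> e2 h.
rewrite /F in e2 h *; lra.
Qed.
End det.

Section gmeas.
Variables (T : pointedType) (R : realType) (G : set (set T)).

Definition gmeas (f : T -> R) := forall B : set R, measurable B -> <<s G >> (f @^-1` B).

Lemma gmeas_fun f : gmeas f <->
  measurable_fun (setT : set (g_sigma_algebraType G)) (f : g_sigma_algebraType G -> R).
Proof.
split => [h _ B mB|h B mB]; first by rewrite setTI; exact: h.
by have := h measurableT B mB; rewrite setTI.
Qed.

Lemma gmeasM f g : gmeas f -> gmeas g -> gmeas (fun w => f w * g w).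
Proof.
move=> /gmeas_fun hf /gmeas_fun hg; apply/gmeas_fun.
exact: (measurable_realfun.measurable_funM hf hg).
Qed.

Lemma gmeasN f : gmeas f -> gmeas (fun w => - f w).
Proof. move=> /gmeas_fun hf; apply/gmeas_fun; exact: (measurable_realfun.measurable_funN hf). Qed.


End gmeas.

Lemma gmeas_in (T : pointedType) (R : realType) (F : set (T -> R)) f : F f ->
  gmeas (\bigcup_(g in F) [set g @^-1` B | B in [set B : set R | measurable B]]) f.
Proof.
move=> Ff B mB; apply: sub_sigma_algebra; exists f => //; by exists B.
Qed.

Lemma gen_sigma_sub d (T : measurableType d) (R : realType) (G : set (set T)) (h : T -> R) :
  gmeas G h -> gen_sigma [set h] `<=` <<s G >>.
Proof.
move=> hh; apply: smallest_sub; first exact: smallest_sigma_algebra.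
by move=> A [f /= -> [B mB <-]]; exact: hh.
Qed.

Lemma indep_sub d (T : measurableType d) (R : realType) (P : probability T R)
  (I : finType) (F G : I -> set (set T)) :
  mutually_independent P F -> (forall i, G i `<=` F i) -> mutually_independent P G.
Proof. by move=> h sub S E hE; apply: h => i iS; apply: sub; exact: hE. Qed.

Section probl.
Context d (T : measurableType d) (R : realType) (P : probability T R).

Lemma Pfin (A : set T) : measurable A -> (fine (P A))%:E = P A.
Proof. by move=> mA; rewrite fineK // fin_num_measure. Qed.

Lemma meas_ge (f : T -> R) c : measurable_fun setT f -> measurable [set w | c <= f w].
Proof.
move=> mf; have := mf measurableT `[c, +oo[%classic (measurable_itv _).
by rewrite setTI preimage_itvcy.
Qed.

Lemma meas_le (f : T -> R) c : measurable_fun setT f -> measurable [set w | f w <= c].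
Proof.
move=> mf; have := mf measurableT `]-oo, c]%classic (measurable_itv _).
by rewrite setTI preimage_itvNyc.
Qed.

Lemma meas_ratio m (X : 'I_m -> T -> R) : (forall i, measurable_fun setT (X i)) ->
  measurable_fun setT (fun w => (\sum_(i < m) X i w) / Num.sqrt (\sum_(i < m) X i w ^+ 2)).
Proof.
move=> mX.
have ms : measurable_fun setT (fun w => \sum_(i < m) X i w) by exact: measurable_sum.
have mq : measurable_fun setT (fun w => \sum_(i < m) X i w ^+ 2).
  by apply: measurable_sum => i; exact: measurable_realfun.measurable_funX.
have -> : (fun w => (\sum_(i < m) X i w) / Num.sqrt (\sum_(i < m) X i w ^+ 2)) =
   (fun w => (\sum_(i < m) X i w) * powR (powR (\sum_(i < m) X i w ^+ 2) 2^-1) (-1)).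
  apply: funext => w; have q0 : 0 <= \sum_(i < m) X i w ^+ 2.
    by apply: sumr_ge0 => i _; exact: sqr_ge0.
  by rewrite powR12_sqrt // powRN powRr1 // sqrtr_ge0.
apply: measurable_realfun.measurable_funM => //.
apply: (measurableT_comp (measurable_realfun.measurable_powR _)).
exact: (measurableT_comp (measurable_realfun.measurable_powR _)).
Qed.


Lemma JSW_upper delta A0 m (X : 'I_m -> T -> R) t :
  JSW_constant P delta A0 -> (0 < m)%N -> (forall i, measurable_fun setT (X i)) ->
  mutually_independent P (fun i => gen_sigma [set X i]) ->
  (forall i, P.-integrable setT (fun w => (X i w)%:E)) ->
  (forall i, Ex P (X i) = 0) ->
  (forall i, (0 < \int[P]_w (powR `|X i w| (2 + delta))%:E)%E) ->
  (forall i, (\int[P]_w (powR `|X i w| (2 + delta))%:E < +oo)%E) ->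
  0 <= t -> t <= jsw_d P delta X ->
  0 <= A0 * powR (1 + t) (1 + delta) * expR (- t ^+ 2 / 2) / powR (jsw_d P delta X) (2 + delta) /\
  fine (P [set w | t <= (\sum_(i < m) X i w) / Num.sqrt (\sum_(i < m) X i w ^+ 2)])
   <= (1 - Phi t) + A0 * powR (1 + t) (1 + delta) * expR (- t ^+ 2 / 2)
       / powR (jsw_d P delta X) (2 + delta).
Proof.
move=> J m0 mX ind int ex pos fin t0 td.
have h := J m X m0 mX ind int ex pos fin t t0 td.
split; first exact: le_trans (normr_ge0 _) h.
have := le_trans (ler_norm _) h; lra.
Qed.


Lemma bigU_bound (I : finType) (B : I -> set T) : (forall i, measurable (B i)) ->
  measurable (\big[setU/set0]_(i : I) B i) /\
  (P (\big[setU/set0]_(i : I) B i) <= \sum_(i : I) P (B i))%E.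
Proof.
move=> mB.
apply: (big_rec2 (fun U s => measurable U /\ (P U <= s)%E)).
  by rewrite measure0; split.
move=> i U s _ [mU hU]; split; first exact: measurableU.
apply: le_trans (measureU2 _ (mB i) mU) _.
exact: leeD.
Qed.


Lemma pos_moment (f : T -> R) p : measurable_fun setT f -> 0 < p ->
  ~ {ae P, forall w, f w = 0} -> (0 < \int[P]_w (powR `|f w| p)%:E)%E.
Proof.
move=> mf p0 nae.
have mr : measurable_fun setT (fun w => powR `|f w| p).
  apply: (measurableT_comp (measurable_realfun.measurable_powR _)).
  by apply: measurableT_comp.
have mg : measurable_fun setT (EFin \o (fun w => powR `|f w| p)).
  exact/measurable_EFinP.
have ge0 : (0 <= \int[P]_w (powR `|f w| p)%:E)%E.
  by apply: integral_ge0 => w _; rewrite lee_fin powR_ge0.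
rewrite lt_neqAle ge0 andbT; apply/negP => /eqP h0; apply: nae.
have : (\int[P]_(w in setT) `|(EFin \o (fun w => powR `|f w| p)) w|%E = 0)%E.
  rewrite h0; apply: eq_integral => w _; by rewrite gee0_abs // lee_fin powR_ge0.
move/(ae_eq_integral_abs _ measurableT mg).
apply: filterS => w /(_ I) /= [] /eqP; by rewrite powR_eq0 normr_eq0 => /andP[/eqP ->].
Qed.


Lemma ExN (f : T -> R) : P.-integrable setT (fun w => (f w)%:E) ->
  Ex P (fun w => - f w) = - Ex P f.
Proof.
move=> hf.
transitivity (Rintegral P setT (fun w => -1 * f w)).
  by rewrite /Ex /Rintegral; congr fine; apply: eq_integral => w _; rewrite mulN1r.
by rewrite RintegralZl // mulN1r.
Qed.

Lemma intN (f : T -> R) : P.-integrable setT (fun w => (f w)%:E) ->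
  P.-integrable setT (fun w => (- f w)%:E).
Proof.
move=> hf; have := integrableN hf.
by rewrite (_ : (-%E \o _) = (fun w => (- f w)%:E)) //; apply: funext => w.
Qed.

End probl.

Lemma feas_det (R : realType) n L (zz : 'I_n -> 'I_L -> R) (uu : 'I_n -> R) t s l :
  (0 < n)%N -> 0 < colmax zz l -> 0 <= t -> 0 <= s ->
  (n%:R)^-1 * \sum_(i < n) uu i ^+ 2 <= s ^+ 2 ->
  ~ (t <= (\sum_(i < n) zz i l * uu i) / Num.sqrt (\sum_(i < n) (zz i l * uu i) ^+ 2)) ->
  ~ (t <= (\sum_(i < n) - (zz i l * uu i)) / Num.sqrt (\sum_(i < n) (- (zz i l * uu i)) ^+ 2)) ->
  `|(n%:R)^-1 * (colmax zz l)^-1 * \sum_(i < n) zz i l * uu i| <= s * (t / Num.sqrt n%:R).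
Proof.
move=> n0 zs0 t0 s0 hu hp hn.
set S := \sum_(i < n) zz i l * uu i.
set V := \sum_(i < n) (zz i l * uu i) ^+ 2.
have V0 : 0 <= V by apply: sumr_ge0 => i _; exact: sqr_ge0.
move: hn; rewrite sumrN; under [X in Num.sqrt X]eq_bigr do rewrite sqrrN; rewrite -/V => hn.
move/negP: hp; rewrite -ltNge => hp.
move/negP: hn; rewrite -ltNge => hn.
have hS : `|S| <= t * Num.sqrt V.
  have [sV0|sVp] := eqVneq (Num.sqrt V) 0.
    have : V = 0 by apply/eqP; rewrite eq_le V0 andbT -sqrtr_eq0 sV0.
    move=> /(psumr_eq0P (fun i _ => sqr_ge0 _)) h.
    rewrite /S big1 ?normr0 ?mulr_ge0 ?sqrtr_ge0 // => i _.
    by have /eqP := h i isT; rewrite sqrf_eq0 => /eqP.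
  have sp : 0 < Num.sqrt V by rewrite lt_neqAle eq_sym sVp sqrtr_ge0.
  rewrite ler_norml; apply/andP; split.
    rewrite lerNl ltW // -ltr_pdivrMr // mulNr; exact: hn.
  by rewrite ltW // -ltr_pdivrMr.
set zs := colmax zz l.
have hz : forall i, `|zz i l| <= zs.
  move=> i; rewrite /zs /colmax; exact: (le_bigmax_r (fun i => `|zz i l|) i).
have zs0' : 0 <= zs := ltW zs0.
have hV : Num.sqrt V <= zs * Num.sqrt (\sum_(i < n) uu i ^+ 2).
  rewrite -(ger0_norm zs0') -sqrtr_sqr -sqrtrM ?sqr_ge0 //; apply: ler_wsqrtr.
  rewrite mulr_sumr; apply: ler_sum => i _; rewrite exprMn; apply: ler_wpM2r.
    exact: sqr_ge0.
  by rewrite -real_normK ?num_real // ler_sqr ?nnegrE ?normr_ge0.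
have n0' : 0 < (n%:R : R) by rewrite ltr0n.
have hU : Num.sqrt (\sum_(i < n) uu i ^+ 2) <= s * Num.sqrt n%:R.
  have : \sum_(i < n) uu i ^+ 2 <= s ^+ 2 * n%:R by rewrite -ler_pdivrMr // mulrC.
  move/ler_wsqrtr; rewrite sqrtrM ?sqr_ge0 // sqrtr_sqr ger0_norm //.
have sn0 : 0 < Num.sqrt (n%:R : R) by rewrite sqrtr_gt0.
rewrite normrM ger0_norm ?mulr_ge0 ?invr_ge0 ?ler0n //.
apply: le_trans (_ : (n%:R)^-1 * zs^-1 * (t * (zs * (s * Num.sqrt n%:R))) <= _).
  apply: ler_wpM2l; first by rewrite mulr_ge0 ?invr_ge0 ?ler0n.
  apply: (le_trans hS); apply: ler_wpM2l => //; apply: (le_trans hV).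
  exact: ler_wpM2l.
have nE : (n%:R : R) = Num.sqrt n%:R * Num.sqrt n%:R.
  by rewrite -expr2 sqr_sqrtr // ler0n.
rewrite [in X in X * _ <= _]nE le_eqVlt; apply/orP; left; apply/eqP.
field; rewrite gt_eqF //; rewrite gt_eqF //.
Qed.


End Helpers.
Import Helpers.

Theorem theorem7 (d : measure_display) (T : measurableType d) (R : realType)
  (P : probability T R) (n K L kend : nat)
  (y : 'I_n -> T -> R) (x : 'I_n -> 'I_K -> T -> R) (z : 'I_n -> 'I_L -> T -> R)
  (u : 'I_n -> T -> R) (beta_star : 'I_K -> R)
  (delta A0 sigma_star gamma1 A : R) :
  (* setting *)
  (0 < n)%N -> (0 < K)%N -> (K <= L)%N -> (kend <= K)%N ->
  (forall i, measurable_fun setT (y i)) ->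
  (forall i k, measurable_fun setT (x i k)) ->
  (forall i l, measurable_fun setT (z i l)) ->
  (forall i, measurable_fun setT (u i)) ->
  (forall i w, y i w = \sum_(k < K) x i k w * beta_star k + u i w) ->
  mutually_independent P (fun i : 'I_n =>
    gen_sigma ([set y i] `|` [set x i k | k in [set: 'I_K]]
               `|` [set z i l | l in [set: 'I_L]] `|` [set u i])) ->
  (forall (i : 'I_n) (l : 'I_L) (k : 'I_K),
      (l < K - kend)%N -> val k = (kend + l)%N -> z i l = x i k) ->
  (forall w k, 0 < colmax (fun i k => x i k w) k) ->
  (forall w l, 0 < colmax (fun i l => z i l w) l) ->
  (* A_0 is the Jing-Shao-Wang constant *)
  JSW_constant P delta A0 ->
  (* Assumption 1 *)
  0 < delta <= 1 ->
  (forall i l, (\int[P]_w (powR `|z i l w * u i w| (2 + delta))%:E < +oo)%E) ->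
  (forall i l, P.-integrable setT (fun w => (z i l w * u i w)%:E)) ->
  (forall i l, Ex P (fun w => z i l w * u i w) = 0) ->
  (forall i l, ~ {ae P, forall w, z i l w * u i w = 0}) ->
  (* Assumption 2 *)
  0 < sigma_star -> 0 < gamma1 < 1 ->
  (P [set w | ((n%:R)^-1 * \sum_(i < n) u i w ^+ 2 <= sigma_star ^+ 2)%R]
     >= (1 - gamma1)%:E)%E ->
  (* choice of A and L *)
  1 <= A ->
  L%:R <= expR (d_n_delta P delta z u ^+ 2 / (2 * A ^+ 2)) ->
  let dn := d_n_delta P delta z u in
  let t := A * Num.sqrt (2 * ln (L%:R : R)) in
  let alpha := 2 * L%:R * (1 - Phi t)
               + 2 * A0 * powR (1 + t) (1 + delta)
                 / (powR (L%:R) (A ^+ 2 - 1) * powR dn (2 + delta)) in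
  let r := A * Num.sqrt (2 * ln (L%:R : R) / n%:R) in
  exists E : set T, measurable E /\
    (P E >= (1 - alpha - gamma1)%:E)%E /\
    forall w, E w ->
    forall bhat : 'I_K -> R,
      is_solution (fun i => y i w) (fun i k => x i k w) (fun i l => z i l w)
        (sigma_star * r) bhat ->
      (forall p : \bar R, (1%:E <= p)%E ->
         ((lpnorm p (fun k => colmax (fun i k => x i k w) k * (bhat k - beta_star k)))%:E
           * kappa (fun i k => x i k w) (fun i l => z i l w) p (supp beta_star)
          <= (2 * sigma_star * r)%:E)%E) /\
      (forall k : 'I_K,
         ((`|bhat k - beta_star k| * colmax (fun i k => x i k w) k)%:E
           * kappa_star (fun i k => x i k w) (fun i l => z i l w) k (supp beta_star)
          <= (2 * sigma_star * r)%:E)%E).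

Proof.
move=> n0 K0 KL kK my mx mz mu hy ind hz xpos zpos JSW hdel hfin hint hex hnae s0 g01 hU A1 hL.
move=> dn t alpha r.
have L0 : (0 < L)%N by apply: leq_trans KL.
pose l0 : 'I_L := Ordinal L0.
have A0' : 0 < A by apply: lt_le_trans A1.
have Lge1 : 1 <= (L%:R : R) by rewrite ler1n.
have lnL0 : 0 <= ln (L%:R : R) by exact: ln_ge0.
have t0 : 0 <= t by rewrite /t mulr_ge0 ?sqrtr_ge0 // ltW.
have t2 : t ^+ 2 = A ^+ 2 * (2 * ln (L%:R : R)).
  by rewrite /t exprMn sqr_sqrtr // mulr_ge0.
pose X (l : 'I_L) : 'I_n -> T -> R := fun i w => z i l w * u i w.
have jsw0 : forall l, 0 <= jsw_d P delta (X l).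
  by move=> l; rewrite /jsw_d divr_ge0 ?sqrtr_ge0 ?powR_ge0.
have dn0 : 0 <= dn.
  apply: lb_le_inf; first by exists (jsw_d P delta (X l0)), l0.
  by move=> _ [l _ <-]; exact: jsw0.
have dnl : forall l, dn <= jsw_d P delta (X l).
  move=> l; apply: ge_inf; last by exists l.
  by exists 0 => _ [l' _ <-]; exact: jsw0.
have tdn : t <= dn.
  rewrite -(ler_pXn2r (_ : (0 < 2)%N)) ?nnegrE // t2.
  have : ln (L%:R : R) <= dn ^+ 2 / (2 * A ^+ 2).
    by rewrite -[X in _ <= X]expRK ler_ln ?posrE ?expR_gt0 // (lt_le_trans ltr01).
  rewrite ler_pdivlMr ?mulr_gt0 ?exprn_gt0 //; nra.
have mX : forall l i, measurable_fun setT (X l i).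
  by move=> l i; exact: measurable_realfun.measurable_funM.
pose Xn (l : 'I_L) : 'I_n -> T -> R := fun i w => - X l i w.
have mXn : forall l i, measurable_fun setT (Xn l i).
  by move=> l i; exact: measurable_realfun.measurable_funN.
have indX : forall l, mutually_independent P (fun i => gen_sigma [set X l i]).
  move=> l; apply: (indep_sub ind) => i; apply: gen_sigma_sub; apply: gmeasM; apply: gmeas_in.
    by left; right; exists l.
  by right.
have indXn : forall l, mutually_independent P (fun i => gen_sigma [set Xn l i]).
  move=> l; apply: (indep_sub ind) => i; apply: gen_sigma_sub; apply: gmeasN.
  apply: gmeasM; apply: gmeas_in.
    by left; right; exists l.
  by right.
have dp : 0 < 2 + delta by case/andP: hdel => d0 _; lra.
have posX : forall l i, (0 < \int[P]_w (powR `|X l i w| (2 + delta))%:E)%E.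
  by move=> l i; apply: pos_moment => //; exact: hnae.
have posXn : forall l i, (0 < \int[P]_w (powR `|Xn l i w| (2 + delta))%:E)%E.
  move=> l i; rewrite (eq_integral (fun w => (powR `|X l i w| (2 + delta))%:E)) ?posX //.
  by move=> w _; rewrite /Xn normrN.
have finXn : forall l i, (\int[P]_w (powR `|Xn l i w| (2 + delta))%:E < +oo)%E.
  move=> l i; rewrite (eq_integral (fun w => (powR `|X l i w| (2 + delta))%:E)) ?hfin //.
  by move=> w _; rewrite /Xn normrN.
have intXn : forall l i, P.-integrable setT (fun w => (Xn l i w)%:E).
  by move=> l i; apply: intN; exact: hint.
have exXn : forall l i, Ex P (Xn l i) = 0.
  by move=> l i; rewrite /Xn ExN ?hex ?oppr0 //; exact: hint.
have jswN : forall l, jsw_d P delta (Xn l) = jsw_d P delta (X l).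
  move=> l; rewrite /jsw_d; congr (Num.sqrt _ / powR _ _).
    by apply: eq_bigr => i _; congr Ex; apply: funext => w; rewrite /Xn sqrrN.
  by apply: eq_bigr => i _; congr Ex; apply: funext => w; rewrite /Xn normrN.
have JP := fun l => JSW_upper JSW n0 (mX l) (indX l) (hint^~ l) (hex^~ l) (posX l)
   (hfin^~ l) t0 (le_trans tdn (dnl l)).
have JN0 : forall l, t <= jsw_d P delta (Xn l) by move=> l; rewrite jswN; exact: le_trans tdn (dnl l).
have JN := fun l => JSW_upper JSW n0 (mXn l) (indXn l) (intXn l) (exXn l) (posXn l)
   (finXn l) t0 (JN0 l).
pose c := A0 * powR (1 + t) (1 + delta) * expR (- t ^+ 2 / 2).
have Tle : forall l, c / powR (jsw_d P delta (X l)) (2 + delta) <= c / powR dn (2 + delta).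
  move=> l; have T0 := (JP l).1; rewrite -/c in T0.
  have [dn00|dnp] := eqVneq dn 0.
    have tt0 : t = 0 by apply/eqP; rewrite eq_le t0 andbT -dn00.
    have lnL : ln (L%:R : R) = 0.
      move: t2; rewrite tt0 expr0n /= => /esym/eqP; rewrite mulf_eq0 expf_eq0 /=.
      by rewrite (gt_eqF A0') mulf_eq0 pnatr_eq0 /= => /eqP.
    have L1 : L = 1%N.
      apply/eqP; rewrite -(pnatr_eq1 R) -[X in X == _]lnK ?lnL ?expR0 //.
      by rewrite posrE (lt_le_trans ltr01).
    have -> : dn = jsw_d P delta (X l); last by [].
    rewrite /dn /d_n_delta; set S := [set _ | _ in _].
    suff -> : S = [set jsw_d P delta (X l)] by rewrite inf1.
    apply/seteqP; split => v.
      case=> l' _ <-; rewrite /= (_ : l' = l) //; apply: ord_inj.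
      move: (ltn_ord l) (ltn_ord l'); move: (nat_of_ord l) (nat_of_ord l') => a b.
      by rewrite L1 !ltnS !leqn0 => /eqP -> /eqP ->.
    by move=> ->; exists l.
  have dnp' : 0 < dn by rewrite lt_neqAle eq_sym dnp dn0.
  have pd : 0 < powR dn (2 + delta) by exact: powR_gt0.
  have pdl : powR dn (2 + delta) <= powR (jsw_d P delta (X l)) (2 + delta).
    apply: ge0_ler_powR; [exact: ltW | rewrite nnegrE // | rewrite nnegrE // | exact: dnl].
  have pl : 0 < powR (jsw_d P delta (X l)) (2 + delta) := lt_le_trans pd pdl.
  have c0 : 0 <= c.
    rewrite (_ : c = c / powR (jsw_d P delta (X l)) (2 + delta) * powR (jsw_d P delta (X l)) (2 + delta)).
      exact: mulr_ge0 T0 (ltW pl).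
    by rewrite divfK // gt_eqF.
  by apply: ler_wpM2l => //; rewrite lef_pV2 ?posrE.
pose Ap l := [set w | t <= (\sum_(i < n) X l i w) / Num.sqrt (\sum_(i < n) X l i w ^+ 2)].
pose An l := [set w | t <= (\sum_(i < n) Xn l i w) / Num.sqrt (\sum_(i < n) Xn l i w ^+ 2)].
have mAp : forall l, measurable (Ap l) by move=> l; apply: meas_ge; exact: meas_ratio.
have mAn : forall l, measurable (An l) by move=> l; apply: meas_ge; exact: meas_ratio.
pose U2 := [set w | ((n%:R)^-1 * \sum_(i < n) u i w ^+ 2 <= sigma_star ^+ 2)%R].
have mU2 : measurable U2.
  apply: meas_le; apply: measurable_realfun.measurable_funM => //.
  by apply: measurable_sum => i; exact: measurable_realfun.measurable_funX.
pose Bad := ~` U2 `|` \big[setU/set0]_(l : 'I_L) (Ap l `|` An l).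
have mApn : forall l, measurable (Ap l `|` An l) by move=> l; apply: measurableU.
have [mB PB] := bigU_bound P mApn.
have mBad : measurable Bad by apply: measurableU => //; exact: measurableC.
have hb : (P Bad <= P (~` U2) + \sum_(l : 'I_L) (P (Ap l) + P (An l)))%E.
  apply: le_trans (measureU2 _ (measurableC mU2) mB) _; apply: leeD => //.
  apply: le_trans PB _; apply: lee_sum => l _; exact: measureU2.
have hr : fine (P Bad) <= fine (P (~` U2)) + \sum_(l : 'I_L) (fine (P (Ap l)) + fine (P (An l))).
  rewrite -lee_fin EFinD -sumEFin.
  under eq_bigr => l _ do rewrite EFinD (Pfin P (mAp l)) (Pfin P (mAn l)).
  by rewrite (Pfin P mBad) (Pfin P (measurableC mU2)).
have hU2 : fine (P (~` U2)) <= gamma1.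
  rewrite probability_setC // -(Pfin P mU2) -EFinB /=.
  move: hU; rewrite -(Pfin P mU2) lee_fin; lra.
have hs : \sum_(l : 'I_L) (fine (P (Ap l)) + fine (P (An l))) <=
    \sum_(l : 'I_L) (2 * ((1 - Phi t) + c / powR dn (2 + delta))).
  apply: ler_sum => l _.
  have h1 := (JP l).2; have h2 := (JN l).2; rewrite jswN in h2.
  rewrite -/c in h1 h2; have h3 := Tle l; rewrite -/(Ap l) in h1; rewrite -/(An l) in h2; lra.
rewrite sumr_const card_ord in hs.
have Lpos : (L%:R : R) \in Num.pos by rewrite posrE (lt_le_trans ltr01).
have Le : L%:R * expR (- t ^+ 2 / 2) = (powR (L%:R : R) (A ^+ 2 - 1))^-1.
  rewrite /powR gt_eqF -?posrE // -expRN -{1}(lnK Lpos) -expRD; congr expR.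
  by rewrite t2; field.
have key : (2 * ((1 - Phi t) + c / powR dn (2 + delta))) *+ L = alpha.
  rewrite /alpha /c -mulr_natr invfM -Le; ring.
exists (~` Bad); split; first exact: measurableC.
split.
  rewrite probability_setC // -(Pfin P mBad) -EFinB lee_fin.
  lra.
move=> w nB bh sol.
have hU2w : U2 w.
  by case: (boolp.pselect (U2 w)) => // h; exfalso; apply: nB; left.
have inbig : forall l, (Ap l `|` An l) w -> (\big[setU/set0]_(l : 'I_L) (Ap l `|` An l)) w.
  by move=> l h; rewrite (bigD1 l) //=; left.
have hApw : forall l, ~ Ap l w by move=> l h; apply: nB; right; apply: (inbig l); left.
have hAnw : forall l, ~ An l w by move=> l h; apply: nB; right; apply: (inbig l); right.
have rE : r = t / Num.sqrt n%:R.
  rewrite /r /t sqrtrM ?mulr_ge0 // sqrtrV ?ler0n // mulrA //.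
have r0 : 0 <= r by rewrite rE divr_ge0 ?sqrtr_ge0.
have feas : feasible (fun i => y i w) (fun i k => x i k w) (fun i l => z i l w)
    (sigma_star * r) beta_star.
  rewrite /feasible; apply: linfnorm_leP; first by rewrite mulr_ge0 // ltW.
  move=> l.
  have e : forall i, y i w - \sum_(k < K) x i k w * beta_star k = u i w.
    by move=> i; rewrite hy; ring.
  under eq_bigr do rewrite e.
  rewrite rE; apply: feas_det => //; first exact: ltW.
    exact: hApw.
  exact: hAnw.
have [cone lin] := det_main (xpos w) feas sol.
split.
  move=> p p1; rewrite -mulrA.
  exact: concl_p cone lin p1.
move=> k; rewrite -mulrA.
have -> : `|bh k - beta_star k| * colmax (fun i k => x i k w) k =
    `|colmax (fun i k => x i k w) k * (bh k - beta_star k)|.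
  by rewrite normrM gtr0_norm ?xpos // mulrC.
exact: concl_k cone lin.
Qed.
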